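(* Consider the following binary classification model of feature learning. Let $p_d\in[0,1]$, $p_r=1-p_d$, and let $t_d,t_r,n_d,n_r,c_d,c_r$ be nonnegative integers with $n_d\le t_d$, $n_r\le t_r$, $c_d\le t_d$, $c_r\le t_r$. Set $c = 2(c_d+c_r)$. Each class $y\in\{1,2\}$ has its own set $D_y$ of $t_d$ dominant features and its own set $R_y$ of $t_r$ rare features, all these sets being pairwise disjoint. **Data.** A data point $(x,y)$ is generated as follows: $y$ is uniform on $\{1,2\}$; with probability $p_d$ the feature set $\Pi(x)$ is a uniformly random $n_d$-subset of $D_y$, and otherwise it is a uniformly random $n_r$-subset of $R_y$. **Models.** A model $f$ is drawn independently of the data by choosing, for each class $y$, a uniformly random $c_d$-subset of $D_y$ and a uniformly random $c_r$-subset of $R_y$, all choices independent; $\Pi(f)$ is the union of these subsets. A model is correct on $(x,y)$ (predicts $y$) if $\Pi(f)\cap\Pi(x)\ne\varnothing$. **Agreement.** Let $\zeta:\mathbb{N}\times\mathbb{N}\to[0,1]$ be an agreement function. Draw two models $f,g$ i.i.d. from this distribution, independent of $(x,y)$, and let $k$ be the number of features of class $y$ that $f$ and $g$ share, i.e. $k = |\Pi(f)\cap\Pi(g)\cap(D_y\cup R_y)|$. The predictions of $f$ and $g$ on $(x,y)$ are as follows: - If both $f$ and $g$ share a feature with $x$, both predict $y$ and so agree. - If exactly one shares a feature with $x$, the other guesses uniformly at random, independently, so they agree with probability $\frac12$. - If neither shares a feature with $x$, they agree with probability $\zeta(k,c)$ when $k\ge1$, and with probability $\frac12$ (independent uniform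 guesses) when $k=0$. With the convention $\binom{n}{r}=0$ when $n<0$, $r<0$ or $n<r$, let $$q_1 = p_d\left(1-\frac{\binom{t_d-c_d}{n_d}}{\binom{t_d}{n_d}}\right)^2 + p_r\left(1-\frac{\binom{t_r-c_r}{n_r}}{\binom{t_r}{n_r}}\right)^2,$$ $$\begin{aligned}q_2(k) = {}& p_d\frac{\binom{t_d-n_d}{c_d}^2}{\binom{t_d}{c_d}^2}\left(\sum_{a+b=k}\frac{\binom{c_d}{a}\binom{t_d-n_d-c_d}{c_d-a}}{\binom{t_d-n_d}{c_d}}\frac{\binom{c_r}{b}\binom{t_r-c_r}{c_r-b}}{\binom{t_r}{c_r}}\right)\\ &+ p_r\frac{\binom{t_r-n_r}{c_r}^2}{\binom{t_r}{c_r}^2}\left(\sum_{a+b=k}\frac{\binom{c_d}{a}\binom{t_d-c_d}{c_d-a}}{\binom{t_d}{c_d}}\frac{\binom{c_r}{b}\binom{t_r-n_r-c_r}{c_r-b}}{\binom{t_r-n_r}{c_r}}\right),\end{aligned}$$ where the sums range over nonnegative integers $a,b$. Then the expected agreement (probability that $f$ and $g$ output the same label on $(x,y)$, over the data, the pair of models and the random guesses) is $$\mathsf{Agr} = \frac12 + \frac12 q_1 + \sum_{k=1}^{c}\left(\zeta(k,c)-\frac12\right)q_2(k).$$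
   Context: In the paper, $c$ is the total model capacity, with $c_d=\frac12 p_d c$ and $c_r=\frac12 p_r c$ rounded to integers so that the total number of features in a model is $c$. The paper describes $\zeta(k,c)$ informally as the probability that two models that both lack any feature of $x$ agree, given that they share $k$ features. Here $k$ is made precise as the number of shared features of $x$'s class, which is the quantity the formula for $q_2(k)$ counts. *)

(* Defs.v *)
From mathcomp Require Import all_boot all_order all_algebra.
Set Implicit Arguments. Unset Strict Implicit. Unset Printing Implicit Defensive.
Import Order.TTheory GRing.Theory Num.Theory.
Local Open Scope ring_scope.

(* Binomial coefficient on integers, with the convention binom n r = 0 when
   n < 0, r < 0 or n < r (the last case is already 'C(n,r) = 0). *)
Definition binz (R : nzRingType) (n r : int) : R :=
  match n, r with
  | Posz n', Posz r' => ('C(n', r'))%:R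
  | _, _ => 0
  end.

Section Model.
Variable R : realFieldType.
Variables td tr nd nr cd cr : nat.

(* Classes y are encoded by bool (true = class 1, false = class 2).
   The dominant features of class y are D_y ~ 'I_td (one copy per class),
   the rare features of class y are R_y ~ 'I_tr (one copy per class);
   copies for distinct classes / kinds are disjoint by construction. *)

Definition model := ({ffun bool -> {set 'I_td}} * {ffun bool -> {set 'I_tr}})%type.

Definition model_w (m : model) : R :=
  \prod_(y : bool)
     ((#|m.1 y| == cd)%:R / ('C(td, cd))%:R * ((#|m.2 y| == cr)%:R / ('C(tr, cr))%:R)).

(* The feature set Pi(x) of a data point of class y is given by its dominant
   part Sd (subset of D_y) and its rare part Sr (subset of R_y).
   f is correct on (x,y) iff Pi(f) meets Pi(x). *)
Definition hits (m : model) (y : bool) (Sd : {set 'I_td}) (Sr : {set 'I_tr}) : bool :=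
  (m.1 y :&: Sd != set0) || (m.2 y :&: Sr != set0).

Definition shared (f g : model) (y : bool) : nat :=
  #|f.1 y :&: g.1 y| + #|f.2 y :&: g.2 y|.

(* Conditional probability (over the random guesses) that f and g agree on (x,y). *)
Definition agree_prob (zeta : nat -> nat -> R) (c : nat) (f g : model) (y : bool)
    (Sd : {set 'I_td}) (Sr : {set 'I_tr}) : R :=
  if hits f y Sd Sr && hits g y Sd Sr then 1
  else if hits f y Sd Sr || hits g y Sd Sr then 2^-1
  else if (0 < shared f g y)%N then zeta (shared f g y) c
  else 2^-1.

Definition agr_given (zeta : nat -> nat -> R) (c : nat) (y : bool)
    (Sd : {set 'I_td}) (Sr : {set 'I_tr}) : R :=
  \sum_(f : model) \sum_(g : model) model_w f * model_w g * agree_prob zeta c f g y Sd Sr.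

Definition Agr (pd : R) (zeta : nat -> nat -> R) : R :=
  let c := (2 * (cd + cr))%N in
  \sum_(y : bool) 2^-1 *
    (pd * \sum_(Sd : {set 'I_td} | #|Sd| == nd)
             (('C(td, nd))%:R)^-1 * agr_given zeta c y Sd set0
     + (1 - pd) * \sum_(Sr : {set 'I_tr} | #|Sr| == nr)
             (('C(tr, nr))%:R)^-1 * agr_given zeta c y set0 Sr).

Definition q1 (pd : R) : R :=
  pd * (1 - binz R (td%:Z - cd%:Z) nd%:Z / binz R td%:Z nd%:Z) ^+ 2
  + (1 - pd) * (1 - binz R (tr%:Z - cr%:Z) nr%:Z / binz R tr%:Z nr%:Z) ^+ 2.

Definition q2 (pd : R) (k : nat) : R :=
  pd * (binz R (td%:Z - nd%:Z) cd%:Z ^+ 2 / binz R td%:Z cd%:Z ^+ 2) *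
    (\sum_(a < k.+1)
       (binz R cd%:Z a%:Z * binz R (td%:Z - nd%:Z - cd%:Z) (cd%:Z - a%:Z)
          / binz R (td%:Z - nd%:Z) cd%:Z) *
       (binz R cr%:Z (k - a)%:Z * binz R (tr%:Z - cr%:Z) (cr%:Z - (k - a)%:Z)
          / binz R tr%:Z cr%:Z))
  + (1 - pd) * (binz R (tr%:Z - nr%:Z) cr%:Z ^+ 2 / binz R tr%:Z cr%:Z ^+ 2) *
    (\sum_(a < k.+1)
       (binz R cd%:Z a%:Z * binz R (td%:Z - cd%:Z) (cd%:Z - a%:Z)
          / binz R td%:Z cd%:Z) *
       (binz R cr%:Z (k - a)%:Z * binz R (tr%:Z - nr%:Z - cr%:Z) (cr%:Z - (k - a)%:Z)
          / binz R (tr%:Z - nr%:Z) cr%:Z)).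

End Model.

(* Main.v *)
Require Import Defs.
From mathcomp Require Import all_boot all_order all_algebra ring lra zify.
Import Order.TTheory GRing.Theory Num.Theory.
Local Open Scope ring_scope.

Lemma marg (R : realFieldType) (I T : finType) (p G : T -> R) (y : I) :
  \sum_t p t = 1 ->
  \sum_(phi : {ffun I -> T}) (\prod_i p (phi i)) * G (phi y) = \sum_t p t * G t.
Proof.
move=> p1.
pose F i t := if i == y then p t * G t else p t.
transitivity (\prod_i \sum_t F i t).
  rewrite bigA_distr_bigA; apply: eq_bigr => phi _.
  rewrite (bigD1 y) //= [in RHS](bigD1 y) //= /F eqxx.
  rewrite [in RHS](eq_bigr (fun i => p (phi i))) => [|i /negbTE -> //].
  by rewrite mulrAC.
rewrite [\prod_i _](bigD1 y) //= [X in _ * X]big1 ?mulr1 => [|i iy].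
  by rewrite /F eqxx.
by rewrite /F (negbTE iy).
Qed.

Lemma sum_ind (R : realFieldType) (T : finType) (P : pred T) :
  \sum_x (P x)%:R = #|P|%:R :> R.
Proof.
rewrite (bigID P) /= [X in _ + X]big1 ?addr0 => [|x /negbTE -> //].
rewrite (eq_bigr (fun _ => 1)) => [|x -> //].
by rewrite sumr_const.
Qed.

Lemma count_inter (T : finType) (B F : {set T}) (k a : nat) :
  F \subset B -> #|F| = k ->
  #|[set G : {set T} | (G \subset B) && (#|G| == k) && (#|G :&: F| == a)]| =
    ('C(k, a) * 'C(#|B| - k, k - a))%N.
Proof.
move=> FB cF.
have [ka|ak] := ltnP k a.
  rewrite bin_small // mul0n; apply: eq_card0 => G; rewrite inE.
  apply/negP => /andP[_ /eqP e].
  have := subset_leq_card (subsetIr G F); rewrite e cF => h.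
  by move: (leq_ltn_trans h ka); rewrite ltnn.
pose phi (G : {set T}) := (G :&: F, G :\: F).
have inj : injective phi.
  move=> G1 G2 [e1 e2].
  by rewrite -(setID G1 F) -(setID G2 F) e1 e2.
rewrite -(card_imset _ inj).
have -> : phi @: [set G : {set T} | (G \subset B) && (#|G| == k) && (#|G :&: F| == a)] =
   setX [set X : {set T} | X \subset F & #|X| == a] [set Y : {set T} | Y \subset B :\: F & #|Y| == (k - a)%N].
  apply/setP => [[X Y]]; rewrite !inE /=.
  apply/imsetP/andP => [[G] | [/andP[XF /eqP cX] /andP[YBF /eqP cY]]].
    rewrite inE => /andP[/andP[GB /eqP cG] /eqP cGF] [-> ->].
    rewrite subsetIr cGF eqxx /=.
    rewrite setSD //=.
    by rewrite -cG -cGF -(cardsID F G) addKn.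
  exists (X :|: Y); last first.
    rewrite /phi; congr pair.
      rewrite setIUl (setIidPl XF).
      have -> : Y :&: F = set0.
        apply/eqP; rewrite setI_eq0 disjoints_subset.
        by apply: (subset_trans YBF); rewrite setDE subsetIr.
      by rewrite setU0.
    rewrite setDUl.
    have -> : X :\: F = set0 by apply/eqP; rewrite setD_eq0.
    rewrite set0U; apply/esym/setDidPl; rewrite disjoints_subset.
    by apply: (subset_trans YBF); rewrite setDE subsetIr.
  rewrite inE; apply/andP; split; [apply/andP; split|].
  - rewrite subUset (subset_trans XF FB) /=.
    by apply: (subset_trans YBF); apply: subsetDl.
  - rewrite cardsU.
    have -> : X :&: Y = set0.
      apply/eqP; rewrite setIC setI_eq0 disjoints_subset.
      apply: (subset_trans YBF); rewrite setDE; apply: subset_trans (subsetIr _ _) _.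
      by rewrite setCS.
    by rewrite cards0 subn0 cX cY subnKC.
  - rewrite setIUl (setIidPl XF).
    have -> : Y :&: F = set0.
      apply/eqP; rewrite setI_eq0 disjoints_subset.
      by apply: (subset_trans YBF); rewrite setDE subsetIr.
    by rewrite setU0 cX.
rewrite cardsX cards_draws cards_draws cF.
by rewrite cardsD (setIidPr FB) cF.
Qed.


Definition wt (R : realFieldType) (T : finType) (c : nat) (A : {set T}) : R :=
  (#|A| == c)%:R / ('C(#|T|, c))%:R.

Arguments wt R {T} c A.

Lemma natb_mul (R : realFieldType) (b1 b2 : bool) : b1%:R * b2%:R = (b1 && b2)%:R :> R.
Proof. by case: b1; case: b2; rewrite ?mulr0 ?mul0r ?mulr1. Qed.

Lemma binR_neq0 (R : realFieldType) n m : (m <= n)%N -> ('C(n, m))%:R != 0 :> R.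
Proof. by move=> h; rewrite pnatr_eq0 -lt0n bin_gt0. Qed.

Lemma wt_sum (R : realFieldType) (T : finType) (c : nat) :
  (c <= #|T|)%N -> \sum_(A : {set T}) wt R c A = 1.
Proof.
move=> cT; rewrite /wt -mulr_suml sum_ind.
have -> : #|[pred A : {set T} | #|A| == c]| = 'C(#|T|, c).
  by rewrite -card_draws; apply: eq_card => A; rewrite !inE.
by rewrite divff // binR_neq0.
Qed.

Lemma wt_avoid (R : realFieldType) (T : finType) (c : nat) (S : {set T}) :
  \sum_(A : {set T}) wt R c A * (A :&: S == set0)%:R =
    ('C(#|T| - #|S|, c))%N%:R / ('C(#|T|, c))%:R.
Proof.
rewrite /wt.
under eq_bigr do rewrite mulrAC natb_mul.
rewrite -mulr_suml sum_ind.
have -> : #|[pred A : {set T} | (#|A| == c) && (A :&: S == set0)]| = 'C(#|T| - #|S|, c)%N.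
  rewrite (cardsCs S) subKn ?max_card //.
  rewrite -cards_draws; apply: eq_card => A; rewrite !inE setI_eq0 disjoints_subset.
  by rewrite andbC.
by [].
Qed.

Lemma wt_pair (R : realFieldType) (T : finType) (c j : nat) (S : {set T}) :
  \sum_(A : {set T}) \sum_(B : {set T}) wt R c A * wt R c B *
     ((A :&: S == set0)%:R * (B :&: S == set0)%:R * (#|A :&: B| == j)%:R) =
  ('C(#|T| - #|S|, c) * 'C(c, j) * 'C(#|T| - #|S| - c, c - j))%N%:R
     / ('C(#|T|, c))%:R ^+ 2.
Proof.
pose K : R := ('C(c, j) * 'C(#|T| - #|S| - c, c - j))%N%:R / ('C(#|T|, c))%:R.
transitivity (\sum_(A : {set T}) wt R c A * (A :&: S == set0)%:R * K).
  apply: eq_bigr => A _.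
  have [/andP[/eqP cA nA]|] := boolP ((#|A| == c) && (A :&: S == set0)); last first.
    rewrite negb_and => h.
    have -> : wt R c A * (A :&: S == set0)%:R = 0.
      by case/orP: h => /negbTE h; rewrite /wt h ?mul0r ?mulr0.
    rewrite mul0r big1 // => B _.
    case/orP: h => /negbTE h; first by rewrite /wt h !mul0r.
    by rewrite h !mul0r mulr0.
  under eq_bigr => B _ do rewrite nA /= mul1r -mulrA.
  rewrite -big_distrr /= nA mulr1; congr (_ * _).
  rewrite /wt /K.
  under eq_bigr do rewrite mulrAC natb_mul natb_mul.
  rewrite -mulr_suml sum_ind; congr (_ / _); congr (_%:R).
  rewrite (cardsCs S) subKn ?max_card //.
  rewrite -(@count_inter _ (~: S) A) //; last by rewrite -disjoints_subset -setI_eq0.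
  apply: eq_card => B; rewrite !inE unfold_in /= setI_eq0 disjoints_subset setIC.
  by case: (#|B| == c); case: (B \subset ~: S).
rewrite -big_distrl /= wt_avoid /K natrM natrM.
rewrite !natrM expr2 invfM; ring.
Qed.


Definition L (R : realFieldType) (T1 T2 : finType) (p1 : {set T1} -> R) (p2 : {set T2} -> R)
  (X : {set T1} -> {set T2} -> {set T1} -> {set T2} -> R) : R :=
  \sum_(A1 : {set T1}) \sum_(A2 : {set T2}) \sum_(B1 : {set T1}) \sum_(B2 : {set T2})
    p1 A1 * p2 A2 * p1 B1 * p2 B2 * X A1 A2 B1 B2.

Arguments L {R T1 T2} p1 p2 X.

Section LL.
Variables (R : realFieldType) (T1 T2 : finType) (p1 : {set T1} -> R) (p2 : {set T2} -> R).

Lemma L_add X Y : L p1 p2 (fun A1 A2 B1 B2 => X A1 A2 B1 B2 + Y A1 A2 B1 B2) =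
  L p1 p2 X + L p1 p2 Y.
Proof.
rewrite /L -big_split; apply: eq_bigr => A1 _; rewrite -big_split; apply: eq_bigr => A2 _.
rewrite -big_split; apply: eq_bigr => B1 _; rewrite -big_split; apply: eq_bigr => B2 _.
by rewrite mulrDr.
Qed.

Lemma L_scale a X : L p1 p2 (fun A1 A2 B1 B2 => a * X A1 A2 B1 B2) = a * L p1 p2 X.
Proof.
rewrite /L big_distrr; apply: eq_bigr => A1 _; rewrite big_distrr; apply: eq_bigr => A2 _.
rewrite big_distrr; apply: eq_bigr => B1 _; rewrite big_distrr; apply: eq_bigr => B2 _ /=.
by rewrite mulrCA.
Qed.

Lemma L_opp X : L p1 p2 (fun A1 A2 B1 B2 => - X A1 A2 B1 B2) = - L p1 p2 X.
Proof.
rewrite -mulN1r -L_scale /L; apply: eq_bigr => A1 _; apply: eq_bigr => A2 _.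
by apply: eq_bigr => B1 _; apply: eq_bigr => B2 _; rewrite mulN1r.
Qed.

Lemma L_sub X Y : L p1 p2 (fun A1 A2 B1 B2 => X A1 A2 B1 B2 - Y A1 A2 B1 B2) =
  L p1 p2 X - L p1 p2 Y.
Proof. by rewrite L_add L_opp. Qed.

Lemma L_0 : L p1 p2 (fun _ _ _ _ => 0) = 0.
Proof.
rewrite /L big1 // => A1 _; rewrite big1 // => A2 _; rewrite big1 // => B1 _.
by rewrite big1 // => B2 _; rewrite mulr0.
Qed.

Lemma L_sum (I : Type) (r : seq I) (F : I -> {set T1} -> {set T2} -> {set T1} -> {set T2} -> R) :
  L p1 p2 (fun A1 A2 B1 B2 => \sum_(i <- r) F i A1 A2 B1 B2) = \sum_(i <- r) L p1 p2 (F i).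
Proof.
elim: r => [|i r IH].
  rewrite big_nil; transitivity (L p1 p2 (fun _ _ _ _ => 0)); last exact: L_0.
  rewrite /L; apply: eq_bigr => A1 _; apply: eq_bigr => A2 _.
  by apply: eq_bigr => B1 _; apply: eq_bigr => B2 _; rewrite big_nil.
rewrite big_cons -IH -L_add /L; apply: eq_bigr => A1 _; apply: eq_bigr => A2 _.
by apply: eq_bigr => B1 _; apply: eq_bigr => B2 _; rewrite big_cons.
Qed.

Definition E2 (T : finType) (p : {set T} -> R) (u : {set T} -> {set T} -> R) : R :=
  \sum_(A : {set T}) \sum_(B : {set T}) p A * p B * u A B.
Arguments E2 {T} p u.

Lemma L_sep u v : L p1 p2 (fun A1 A2 B1 B2 => u A1 B1 * v A2 B2) = E2 p1 u * E2 p2 v.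
Proof.
rewrite /E2 big_distrl; apply: eq_bigr => A1 _ /=.
rewrite big_distrl /= exchange_big; apply: eq_bigr => A2 _ /=.
rewrite big_distrr /=; apply: eq_bigr => B1 _ /=.
rewrite big_distrr /=; apply: eq_bigr => B2 _ /=.
ring.
Qed.

Lemma eqL X Y (P1 : pred {set T1}) (P2 : pred {set T2}) :
  (forall A, ~~ P1 A -> p1 A = 0) -> (forall A, ~~ P2 A -> p2 A = 0) ->
  (forall A1 A2 B1 B2, P1 A1 -> P2 A2 -> P1 B1 -> P2 B2 -> X A1 A2 B1 B2 = Y A1 A2 B1 B2) ->
  L p1 p2 X = L p1 p2 Y.
Proof.
move=> h1 h2 h; rewrite /L; apply: eq_bigr => A1 _; apply: eq_bigr => A2 _.
apply: eq_bigr => B1 _; apply: eq_bigr => B2 _.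
case: (boolP (P1 A1)) => [a1|/h1 ->]; last by rewrite !mul0r.
case: (boolP (P2 A2)) => [a2|/h2 ->]; last by rewrite !(mul0r, mulr0).
case: (boolP (P1 B1)) => [b1|/h1 ->]; last by rewrite !(mul0r, mulr0).
case: (boolP (P2 B2)) => [b2|/h2 ->]; last by rewrite !(mul0r, mulr0).
by rewrite h.
Qed.

Lemma E2_fact (T : finType) (p : {set T} -> R) x y :
  E2 p (fun A B => x A * y B) = (\sum_A p A * x A) * (\sum_B p B * y B).
Proof.
rewrite /E2 big_distrl; apply: eq_bigr => A _ /=; rewrite big_distrr; apply: eq_bigr => B _ /=.
ring.
Qed.

End LL.
Arguments E2 {R T} p u.


Lemma inner_conv (R : realFieldType) (x y k : nat) :
  \sum_(a < k.+1) (x == a :> nat)%:R * (y == (k - a)%N)%:R = (x + y == k)%:R :> R.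
Proof.
have [xk|kx] := leqP x k.
  have xk' : (x < k.+1)%N by [].
  rewrite (bigD1 (Ordinal xk')) //= eqxx mul1r big1 ?addr0.
    by have -> : (y == (k - x)%N) = (x + y == k) by apply/eqP/eqP; lia.
  move=> i ne; have -> : (x == i) = false.
    by apply/negbTE; apply: contra ne => /eqP e; apply/eqP/val_inj => /=.
  by rewrite mul0r.
rewrite big1.
  have -> : (x + y == k) = false by apply/negbTE/eqP; lia.
  by [].
move=> i _; have -> : (x == i) = false.
  by apply/negbTE/eqP => e; move: (ltn_ord i); rewrite -e; lia.
by rewrite mul0r.
Qed.

Lemma outer_conv (R : realFieldType) (f : nat -> R) s c : (s <= c)%N ->
  \sum_(1 <= k < c.+1) f k * (s == k)%:R = if (0 < s)%N then f s else 0.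
Proof.
move=> sc; case: ifP => s0.
  rewrite (bigD1_seq s) /=; last first.
  - exact: iota_uniq.
  - by rewrite mem_index_iota s0 ltnS.
  rewrite eqxx mulr1 big1 ?addr0 // => k ks.
  by rewrite eq_sym (negbTE ks) mulr0.
rewrite big_nat big1 // => k /andP[k1 _].
have -> : (s == k) = false by apply/negbTE/eqP; lia.
by rewrite mulr0.
Qed.

Lemma agree_point (R : realFieldType) (zeta : nat -> nat -> R) (c : nat) (h1 h2 g1 g2 : bool) (x y : nat) :
  (x + y <= c)%N ->
  (let hf := ~~ h1 || ~~ h2 in let hg := ~~ g1 || ~~ g2 in
   if hf && hg then 1 else if hf || hg then 2^-1
   else if (0 < x + y)%N then zeta (x + y)%N c else 2^-1)
  = 1 - 2^-1 * (h1%:R * h2%:R) - 2^-1 * (g1%:R * g2%:R)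
    + 2^-1 * ((h1%:R * g1%:R) * (h2%:R * g2%:R))
    + \sum_(1 <= k < c.+1) (zeta k c - 2^-1) *
        \sum_(a < k.+1) ((h1%:R * g1%:R * (x == a :> nat)%:R) *
                         (h2%:R * g2%:R * (y == (k - a)%N)%:R)).
Proof.
move=> hxy.
have hh : (2^-1 : R) + 2^-1 = 1.
  by rewrite -mulr2n -[_ *+ 2]mulr_natr mulVf // pnatr_eq0.
set u : R := h1%:R * g1%:R; set v : R := h2%:R * g2%:R.
have E : \sum_(1 <= k < c.+1) (zeta k c - 2^-1) *
        \sum_(a < k.+1) ((u * (x == a :> nat)%:R) * (v * (y == (k - a)%N)%:R))
     = u * v * (if (0 < x + y)%N then zeta (x + y)%N c - 2^-1 else 0).
  rewrite -(@outer_conv _ (fun k => zeta k c - 2^-1) (x + y)%N c) // big_distrr /=.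
  apply: eq_bigr => k _.
  rewrite -inner_conv big_distrr big_distrr /= big_distrr; apply: eq_bigr => a _ /=; ring.
rewrite E /u /v; clear u v E.
case: (0 < x + y)%N; case: h1; case: h2; case: g1; case: g2 => /=;
  rewrite ?(mul0r, mulr0, mul1r, mulr1, addr0, subr0); lra.
Qed.


Lemma L_sep' (R : realFieldType) (T1 T2 : finType) (p1 : {set T1} -> R) (p2 : {set T2} -> R) u v X :
  (forall A1 A2 B1 B2, X A1 A2 B1 B2 = u A1 B1 * v A2 B2) ->
  L p1 p2 X = E2 p1 u * E2 p2 v.
Proof.
move=> h; rewrite -L_sep /L; apply: eq_bigr => A1 _; apply: eq_bigr => A2 _.
by apply: eq_bigr => B1 _; apply: eq_bigr => B2 _; rewrite h.
Qed.

Lemma E2_fact' (R : realFieldType) (T : finType) (p : {set T} -> R) x y u :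
  (forall A B, u A B = x A * y B) ->
  E2 p u = (\sum_A p A * x A) * (\sum_B p B * y B).
Proof.
move=> h; rewrite -E2_fact /E2; apply: eq_bigr => A _; apply: eq_bigr => B _.
by rewrite h.
Qed.

Definition Pav (R : realFieldType) (T : finType) (c : nat) (S : {set T}) : R :=
  ('C(#|T| - #|S|, c))%N%:R / ('C(#|T|, c))%:R.

Definition Qav (R : realFieldType) (T : finType) (c : nat) (S : {set T}) (j : nat) : R :=
  ('C(#|T| - #|S|, c) * 'C(c, j) * 'C(#|T| - #|S| - c, c - j))%N%:R
     / ('C(#|T|, c))%:R ^+ 2.
Arguments Pav R {T} c S.
Arguments Qav R {T} c S j.

Lemma set_level (R : realFieldType) (T1 T2 : finType) (c1 c2 c : nat)
  (zeta : nat -> nat -> R) (S1 : {set T1}) (S2 : {set T2}) :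
  (c1 <= #|T1|)%N -> (c2 <= #|T2|)%N -> (c1 + c2 <= c)%N ->
  L (wt R c1) (wt R c2) (fun A1 A2 B1 B2 =>
     let hf := (A1 :&: S1 != set0) || (A2 :&: S2 != set0) in
     let hg := (B1 :&: S1 != set0) || (B2 :&: S2 != set0) in
     if hf && hg then 1 else if hf || hg then 2^-1
     else if (0 < #|A1 :&: B1| + #|A2 :&: B2|)%N
          then zeta (#|A1 :&: B1| + #|A2 :&: B2|)%N c else 2^-1)
  = 2^-1 + 2^-1 * (1 - Pav R c1 S1 * Pav R c2 S2) ^+ 2
    + \sum_(1 <= k < c.+1) (zeta k c - 2^-1) *
        \sum_(a < k.+1) Qav R c1 S1 a * Qav R c2 S2 (k - a).
Proof.
move=> h1 h2 hc.
rewrite (@eqL _ _ _ _ _ _ (fun A1 A2 B1 B2 =>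
   1 - 2^-1 * ((A1 :&: S1 == set0)%:R * (A2 :&: S2 == set0)%:R)
     - 2^-1 * ((B1 :&: S1 == set0)%:R * (B2 :&: S2 == set0)%:R)
    + 2^-1 * (((A1 :&: S1 == set0)%:R * (B1 :&: S1 == set0)%:R) *
              ((A2 :&: S2 == set0)%:R * (B2 :&: S2 == set0)%:R))
    + \sum_(1 <= k < c.+1) (zeta k c - 2^-1) *
        \sum_(a < k.+1) (((A1 :&: S1 == set0)%:R * (B1 :&: S1 == set0)%:R *
                            (#|A1 :&: B1| == a :> nat)%:R) *
                         ((A2 :&: S2 == set0)%:R * (B2 :&: S2 == set0)%:R *
                            (#|A2 :&: B2| == (k - a)%N)%:R)))
   (fun A => #|A| == c1) (fun A => #|A| == c2)); last first.
- move=> A1 A2 B1 B2 /eqP a1 /eqP a2 _ _; apply: agree_point.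
  have := subset_leq_card (subsetIl A1 B1); have := subset_leq_card (subsetIl A2 B2).
  lia.
- by move=> A /negbTE h; rewrite /wt h mul0r.
- by move=> A /negbTE h; rewrite /wt h mul0r.
rewrite !L_add !L_opp !L_scale L_sum.
rewrite (eq_bigr (fun k => (zeta k c - 2^-1) * \sum_(a < k.+1) Qav R c1 S1 a * Qav R c2 S2 (k - a))); last first.
  move=> k _; rewrite L_scale L_sum; congr (_ * _); apply: eq_bigr => a _.
  by rewrite L_sep /E2 /Qav !wt_pair.
have e1 : \sum_(A : {set T1}) wt R c1 A * 1 = 1.
  by rewrite (eq_bigr (fun A => wt R c1 A)) ?wt_sum // => A _; rewrite mulr1.
have e2 : \sum_(A : {set T2}) wt R c2 A * 1 = 1.
  by rewrite (eq_bigr (fun A => wt R c2 A)) ?wt_sum // => A _; rewrite mulr1.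
have f1 : \sum_(A : {set T1}) wt R c1 A * (A :&: S1 == set0)%:R = Pav R c1 S1 by rewrite wt_avoid.
have f2 : \sum_(A : {set T2}) wt R c2 A * (A :&: S2 == set0)%:R = Pav R c2 S2 by rewrite wt_avoid.
rewrite (@L_sep' _ _ _ _ _ (fun _ _ => 1) (fun _ _ => 1)); last by move=> *; rewrite mulr1.
rewrite (@L_sep' _ _ _ _ _ (fun A _ => (A :&: S1 == set0)%:R) (fun A _ => (A :&: S2 == set0)%:R)); last by [].
rewrite (@L_sep' _ _ _ _ _ (fun _ B => (B :&: S1 == set0)%:R) (fun _ B => (B :&: S2 == set0)%:R)); last by [].
rewrite (@L_sep' _ _ _ _ _ (fun A B => (A :&: S1 == set0)%:R * (B :&: S1 == set0)%:R) (fun A B => (A :&: S2 == set0)%:R * (B :&: S2 == set0)%:R)); last by [].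
rewrite (@E2_fact' _ _ _ (fun _ => 1) (fun _ => 1)); last by move=> *; rewrite mulr1.
rewrite (@E2_fact' _ _ _ (fun _ => 1) (fun _ => 1)); last by move=> *; rewrite mulr1.
rewrite (@E2_fact' _ _ _ (fun A => (A :&: S1 == set0)%:R) (fun _ => 1)); last by move=> *; rewrite mulr1.
rewrite (@E2_fact' _ _ _ (fun A => (A :&: S2 == set0)%:R) (fun _ => 1)); last by move=> *; rewrite mulr1.
rewrite (@E2_fact' _ _ _ (fun _ => 1) (fun A => (A :&: S1 == set0)%:R)); last by move=> *; rewrite mul1r.
rewrite (@E2_fact' _ _ _ (fun _ => 1) (fun A => (A :&: S2 == set0)%:R)); last by move=> *; rewrite mul1r.
rewrite (@E2_fact' _ _ _ (fun A => (A :&: S1 == set0)%:R) (fun A => (A :&: S1 == set0)%:R)); last by [].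
rewrite (@E2_fact' _ _ _ (fun A => (A :&: S2 == set0)%:R) (fun A => (A :&: S2 == set0)%:R)); last by [].
rewrite /= e1 e2 f1 f2.
congr (_ + _); field.
by [].
Qed.


Lemma marg_pair (R : realFieldType) (I T1 T2 : finType) (p1 : T1 -> R) (p2 : T2 -> R)
  (H : T1 -> T2 -> R) (y : I) :
  \sum_t p1 t = 1 -> \sum_t p2 t = 1 ->
  \sum_(f : {ffun I -> T1} * {ffun I -> T2})
     (\prod_i (p1 (f.1 i) * p2 (f.2 i))) * H (f.1 y) (f.2 y)
  = \sum_t1 \sum_t2 p1 t1 * p2 t2 * H t1 t2.
Proof.
move=> s1 s2.
rewrite -(pair_bigA _ (fun (f1 : {ffun I -> T1}) (f2 : {ffun I -> T2}) => (\prod_i (p1 (f1 i) * p2 (f2 i))) * H (f1 y) (f2 y))) /=.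
transitivity (\sum_(f1 : {ffun I -> T1}) (\prod_i p1 (f1 i)) *
                 (fun t1 => \sum_t2 p2 t2 * H t1 t2) (f1 y)).
  apply: eq_bigr => f1 _ /=.
  rewrite -(@marg _ _ _ p2 (fun t2 => H (f1 y) t2) y s2) big_distrr /=.
  apply: eq_bigr => f2 _; rewrite big_split /=; ring.
rewrite (@marg _ _ _ p1 (fun t1 => \sum_t2 p2 t2 * H t1 t2) y s1).
apply: eq_bigr => t1 _; rewrite big_distrr /=; apply: eq_bigr => t2 _; ring.
Qed.

Lemma model_level (R : realFieldType) (td tr cd cr : nat) (zeta : nat -> nat -> R) (c : nat)
  (y : bool) (Sd : {set 'I_td}) (Sr : {set 'I_tr}) :
  (cd <= td)%N -> (cr <= tr)%N ->
  agr_given cd cr zeta c y Sd Sr =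
  L (wt R cd) (wt R cr) (fun A1 A2 B1 B2 =>
     let hf := (A1 :&: Sd != set0) || (A2 :&: Sr != set0) in
     let hg := (B1 :&: Sd != set0) || (B2 :&: Sr != set0) in
     if hf && hg then 1 else if hf || hg then 2^-1
     else if (0 < #|A1 :&: B1| + #|A2 :&: B2|)%N
          then zeta (#|A1 :&: B1| + #|A2 :&: B2|)%N c else 2^-1).
Proof.
move=> hd hr.
have s1 : \sum_(A : {set 'I_td}) wt R cd A = 1 by apply: wt_sum; rewrite card_ord.
have s2 : \sum_(A : {set 'I_tr}) wt R cr A = 1 by apply: wt_sum; rewrite card_ord.
have mw : forall m : model td tr, model_w R cd cr m =
    \prod_i (wt R cd (m.1 i) * wt R cr (m.2 i)).
  by move=> m; rewrite /model_w /wt !card_ord.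
set agS := (fun A1 A2 B1 B2 => _ : R).
rewrite /agr_given.
transitivity (\sum_(f : model td tr) model_w R cd cr f *
   (fun A1 A2 => \sum_(B1 : {set 'I_td}) \sum_(B2 : {set 'I_tr})
        wt R cd B1 * wt R cr B2 * agS A1 A2 B1 B2) (f.1 y) (f.2 y)).
  apply: eq_bigr => f _ /=.
  rewrite -(@marg_pair _ _ _ _ _ _ (fun B1 B2 => agS (f.1 y) (f.2 y) B1 B2) y s1 s2) big_distrr /=.
  by apply: eq_bigr => g _; rewrite mw [model_w _ _ _ g]mw mulrA.
under eq_bigr do rewrite mw.
rewrite (@marg_pair _ _ _ _ _ _ (fun A1 A2 => \sum_(B1 : {set 'I_td}) \sum_(B2 : {set 'I_tr}) wt R cd B1 * wt R cr B2 * agS A1 A2 B1 B2) y s1 s2) /L.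
apply: eq_bigr => A1 _; apply: eq_bigr => A2 _.
rewrite big_distrr /=; apply: eq_bigr => B1 _.
rewrite big_distrr /=; apply: eq_bigr => B2 _.
ring.
Qed.


Lemma bin_swap (t n c : nat) : (n <= t)%N -> (c <= t)%N ->
  ('C(t - n, c) * 'C(t, n) = 'C(t - c, n) * 'C(t, c))%N.
Proof.
move=> nt ct.
have [le|lt] := leqP (n + c) t; last first.
  rewrite (@bin_small (t - n) c); last lia.
  by rewrite (@bin_small (t - c) n) //; lia.
have K : (0 < n`! * c`! * (t - n - c)`!)%N by rewrite !muln_gt0 !fact_gt0.
have e1 : ('C(t - n, c) * 'C(t, n) * (n`! * c`! * (t - n - c)`!))%N = t`!.
  rewrite -(bin_fact nt) -(@bin_fact (t - n) c); last lia.
  ring.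
have e2 : ('C(t - c, n) * 'C(t, c) * (n`! * c`! * (t - n - c)`!))%N = t`!.
  rewrite -(bin_fact ct) -(@bin_fact (t - c) n); last lia.
  have -> : (t - c - n = t - n - c)%N by lia.
  ring.
by apply/eqP; rewrite -(eqn_pmul2r K) e1 e2.
Qed.

Lemma binzP (R : realFieldType) (m r : nat) : binz R m%:Z r%:Z = ('C(m, r))%:R.
Proof. by []. Qed.

Lemma bz1 (R : realFieldType) (t n c a : nat) : (n <= t)%N -> (c <= t)%N ->
  binz R (t%:Z - n%:Z) c%:Z ^+ 2 / binz R t%:Z c%:Z ^+ 2 *
  (binz R c%:Z a%:Z * binz R (t%:Z - n%:Z - c%:Z) (c%:Z - a%:Z) / binz R (t%:Z - n%:Z) c%:Z)
  = ('C(t - n, c) * 'C(c, a) * 'C(t - n - c, c - a))%N%:R / ('C(t, c))%:R ^+ 2.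
Proof.
move=> nt ct.
rewrite subzn // !binzP.
have Y : ('C(t, c))%:R != 0 :> R by apply: binR_neq0.
have [cn|nc] := leqP c (t - n); last first.
  by rewrite (bin_small nc) !mul0n !mul0r expr0n /= !mul0r.
have X : ('C(t - n, c))%:R != 0 :> R by apply: binR_neq0.
rewrite subzn //.
have [ac|ca] := leqP a c; last first.
  by rewrite (bin_small ca) !(muln0, mul0n, mul0r, mulr0).
rewrite subzn // binzP !natrM.
by field; rewrite X Y.
Qed.

Lemma bz0 (R : realFieldType) (t c b : nat) : (c <= t)%N ->
  binz R c%:Z b%:Z * binz R (t%:Z - c%:Z) (c%:Z - b%:Z) / binz R t%:Z c%:Z
  = ('C(t - 0, c) * 'C(c, b) * 'C(t - 0 - c, c - b))%N%:R / ('C(t, c))%:R ^+ 2.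
Proof.
move=> ct.
rewrite !subn0 subzn // !binzP.
have Y : ('C(t, c))%:R != 0 :> R by apply: binR_neq0.
have [bc|cb] := leqP b c; last first.
  by rewrite (bin_small cb) !(muln0, mul0n, mul0r, mulr0).
rewrite subzn // binzP !natrM.
by field; rewrite Y.
Qed.

Lemma avg (R : realFieldType) (T : finType) (t n : nat) (G : {set T} -> R) (v : R) :
  #|T| = t -> (n <= t)%N -> (forall S : {set T}, #|S| = n -> G S = v) ->
  \sum_(S : {set T} | #|S| == n) (('C(t, n))%:R)^-1 * G S = v.
Proof.
move=> hT hn hG.
rewrite (eq_bigr (fun _ => ('C(t, n))%:R^-1 * v)) => [|S /eqP h]; last by rewrite hG.
rewrite big_mkcond /=.
rewrite (eq_bigr (fun S : {set T} => (#|S| == n)%:R * (('C(t, n))%:R^-1 * v))); last first.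
  by move=> S _; case: (#|S| == n); rewrite ?mul1r ?mul0r.
rewrite -big_distrl /= sum_ind.
have -> : #|[pred S : {set T} | #|S| == n]| = 'C(t, n).
  by rewrite -hT -card_draws; apply: eq_card => S; rewrite !inE.
by rewrite mulrA mulfV ?mul1r // binR_neq0.
Qed.

Definition Pn (R : realFieldType) (t c n : nat) : R := ('C(t - n, c))%N%:R / ('C(t, c))%:R.
Definition Qn (R : realFieldType) (t c n j : nat) : R :=
  ('C(t - n, c) * 'C(c, j) * 'C(t - n - c, c - j))%N%:R / ('C(t, c))%:R ^+ 2.

Lemma q1E (R : realFieldType) (pd : R) (td tr nd nr cd cr : nat) :
  (nd <= td)%N -> (nr <= tr)%N -> (cd <= td)%N -> (cr <= tr)%N ->
  q1 td tr nd nr cd cr pd =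
  pd * (1 - Pn R td cd nd * Pn R tr cr 0) ^+ 2 + (1 - pd) * (1 - Pn R td cd 0 * Pn R tr cr nr) ^+ 2.
Proof.
move=> hnd hnr hcd hcr.
have P0 : forall t c, (c <= t)%N -> Pn R t c 0 = 1.
  by move=> t c h; rewrite /Pn subn0 divff // binR_neq0.
rewrite /q1 P0 // P0 // mulr1 mul1r !subzn // !binzP.
have sw : forall t n c, (n <= t)%N -> (c <= t)%N ->
    ('C(t - c, n))%:R / ('C(t, n))%:R = Pn R t c n :> R.
  move=> t n c h1 h2; rewrite /Pn; apply/eqP.
  rewrite eqr_div ?binR_neq0 // -!natrM; apply/eqP; congr (_%:R).
  by rewrite (bin_swap _ _ _ h1 h2).
by rewrite sw // sw.
Qed.

Lemma q2E (R : realFieldType) (pd : R) (td tr nd nr cd cr k : nat) :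
  (nd <= td)%N -> (nr <= tr)%N -> (cd <= td)%N -> (cr <= tr)%N ->
  q2 td tr nd nr cd cr pd k =
  pd * \sum_(a < k.+1) Qn R td cd nd a * Qn R tr cr 0 (k - a)
  + (1 - pd) * \sum_(a < k.+1) Qn R td cd 0 a * Qn R tr cr nr (k - a).
Proof.
move=> hnd hnr hcd hcr.
rewrite /q2; congr (_ + _).
  rewrite -mulrA big_distrr; congr (_ * _); apply: eq_bigr => a _.
  rewrite /Qn -(bz1 R td nd cd a) // -(bz0 R tr cr (k - a)) //.
  exact: mulrA.
rewrite -mulrA big_distrr; congr (_ * _); apply: eq_bigr => a _.
rewrite /Qn -(bz1 R tr nr cr (k - a)) // -(bz0 R td cd a) //.
exact: mulrCA.
Qed.


Theorem mainTheorem2 (R : realFieldType) (pd : R) (td tr nd nr cd cr : nat)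
    (zeta : nat -> nat -> R) :
  0 <= pd <= 1 ->
  (nd <= td)%N -> (nr <= tr)%N -> (cd <= td)%N -> (cr <= tr)%N ->
  (forall k c', 0 <= zeta k c' <= 1) ->
  Agr td tr nd nr cd cr pd zeta =
    2^-1 + 2^-1 * q1 td tr nd nr cd cr pd
    + \sum_(1 <= k < (2 * (cd + cr)).+1)
        (zeta k (2 * (cd + cr))%N - 2^-1) * q2 td tr nd nr cd cr pd k.
Proof.
move=> _ hnd hnr hcd hcr _.
have hc : (cd + cr <= 2 * (cd + cr))%N by lia.
pose Vd := 2^-1 + 2^-1 * (1 - Pn R td cd nd * Pn R tr cr 0) ^+ 2
    + \sum_(1 <= k < (2 * (cd + cr)).+1) (zeta k (2 * (cd + cr))%N - 2^-1) *
        \sum_(a < k.+1) Qn R td cd nd a * Qn R tr cr 0 (k - a).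
pose Vr := 2^-1 + 2^-1 * (1 - Pn R td cd 0 * Pn R tr cr nr) ^+ 2
    + \sum_(1 <= k < (2 * (cd + cr)).+1) (zeta k (2 * (cd + cr))%N - 2^-1) *
        \sum_(a < k.+1) Qn R td cd 0 a * Qn R tr cr nr (k - a).
have AD : forall y : bool, \sum_(Sd : {set 'I_td} | #|Sd| == nd)
    (('C(td, nd))%:R)^-1 * agr_given cd cr zeta (2 * (cd + cr))%N y Sd (set0 : {set 'I_tr}) = Vd.
  move=> y; apply: (@avg R _ td nd (fun Sd => agr_given cd cr zeta (2 * (cd + cr))%N y Sd set0)); rewrite ?card_ord // => Sd h.
  rewrite model_level // set_level ?card_ord //.
  by rewrite /Pav /Qav !card_ord h cards0.
have AR : forall y : bool, \sum_(Sr : {set 'I_tr} | #|Sr| == nr)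
    (('C(tr, nr))%:R)^-1 * agr_given cd cr zeta (2 * (cd + cr))%N y (set0 : {set 'I_td}) Sr = Vr.
  move=> y; apply: (@avg R _ tr nr (fun Sr => agr_given cd cr zeta (2 * (cd + cr))%N y set0 Sr)); rewrite ?card_ord // => Sr h.
  rewrite model_level // set_level ?card_ord //.
  by rewrite /Pav /Qav !card_ord h cards0.
rewrite /Agr /=.
under eq_bigr do rewrite AD AR.
rewrite big_bool /= q1E //.
under [X in _ = _ + X]eq_bigr do rewrite q2E //.
rewrite (eq_bigr (fun k => pd * ((zeta k (2 * (cd + cr))%N - 2^-1) *
          \sum_(a < k.+1) Qn R td cd nd a * Qn R tr cr 0 (k - a)) +
        (1 - pd) * ((zeta k (2 * (cd + cr))%N - 2^-1) *
          \sum_(a < k.+1) Qn R td cd 0 a * Qn R tr cr nr (k - a)))); last first.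
  by move=> k _; ring.
rewrite big_split /= -!big_distrr /= /Vd /Vr.
by field.
Qed.
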